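(* Let $\star\in\{\boxtimes,\circ,\times\}$, $k$ a positive integer, and $G,H$ graphs. Then $m_k(G\star H)$ is $\ast$-well-behaved w.r.t. $G$ and $H$ if and only if there exist positive integers $k_G,k_H$ with $k_Gk_H=k$ such that $m_k(G\star H)=2\,m_{k_G}(G)\,m_{k_H}(H)$.
   Context: Graphs are finite, simple, undirected, with non-empty vertex set. For a positive integer $k$, a $k$-matching of $G=(V,E)$ is a set $M\subseteq E$ such that every vertex is incident to either $0$ or exactly $k$ edges of $M$ (the empty set is one); $m_k(G)$ is the maximum size of a $k$-matching of $G$. Products on $V_G\times V_H$: in $G\boxtimes H$, $(g,h)\sim(g',h')$ iff (i) $\{g,g'\}\in E_G$, $h=h'$; or (ii) $g=g'$, $\{h,h'\}\in E_H$; or (iii) $\{g,g'\}\in E_G$ and $\{h,h'\}\in E_H$; in $G\times H$ iff (iii); in $G\circ H$ iff $\{g,g'\}\in E_G$ or (ii). For $M_G\subseteq E_G$, $M_H\subseteq E_H$ define $F_{\ast}(M_G,M_H)=\{\{(g,h),(g',h')\}:\{g,g'\}\in M_G,\{h,h'\}\in M_H\}$. $m_k(G\star H)$ is $\ast$-well-behaved w.r.t. $G$ and $H$ if $m_k(G\star H)=|F_{\ast}(M_G,M_H)|$ for some $M_G\subseteq E_G$, $M_H\subseteq E_H$ for which $F_{\ast}(M_G,M_H)$ is a $k$-matching of $G\star H$. *)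

(* Defs.v *)
(* Graphs: finite type of vertices with a symmetric,
   irreflexive adjacency relation; edges are 2-element vertex sets. *)
From mathcomp Require Import all_boot.
Set Implicit Arguments. Unset Strict Implicit. Unset Printing Implicit Defensive.

Section Defs.
Variable T : finType.

Definition edges (e : rel T) : {set {set T}} :=
  [set E : {set T} | [exists x, exists y, e x y && (E == [set x; y])]].

Definition kmatching (e : rel T) (k : nat) (M : {set {set T}}) : bool :=
  (M \subset edges e) &&
  [forall v : T, (#|[set E in M | v \in E]| == 0) || (#|[set E in M | v \in E]| == k)].

Definition mk (k : nat) (e : rel T) : nat :=
  \max_(M : {set {set T}} | kmatching e k M) #|M|.
End Defs.

Inductive gprod := Strong | Lexico | Tensor.

Definition prod_rel (p : gprod) (T1 T2 : finType) (e1 : rel T1) (e2 : rel T2)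
  : rel (T1 * T2) :=
  fun x y =>
    match p with
    | Strong => [|| e1 x.1 y.1 && (x.2 == y.2),
                    (x.1 == y.1) && e2 x.2 y.2 |
                    e1 x.1 y.1 && e2 x.2 y.2]
    | Lexico => e1 x.1 y.1 || ((x.1 == y.1) && e2 x.2 y.2)
    | Tensor => e1 x.1 y.1 && e2 x.2 y.2
    end.

Definition Fset (T1 T2 : finType) (MG : {set {set T1}}) (MH : {set {set T2}})
  : {set {set (T1 * T2)}} :=
  [set E : {set (T1 * T2)} | [exists g, exists g', exists h, exists h',
     [&& [set g; g'] \in MG, [set h; h'] \in MH & E == [set (g, h); (g', h')]]]].

Definition well_behaved (p : gprod) (k : nat) (T1 T2 : finType)
  (e1 : rel T1) (e2 : rel T2) : Prop :=
  exists (MG : {set {set T1}}) (MH : {set {set T2}}),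
    [/\ MG \subset edges e1, MH \subset edges e2,
        kmatching (prod_rel p e1 e2) k (Fset MG MH) &
        mk k (prod_rel p e1 e2) = #|Fset MG MH| ].

(* Main.v *)
Require Import Defs.
From mathcomp Require Import all_boot.
Set Implicit Arguments. Unset Strict Implicit.

Definition nbr (T : finType) (M : {set {set T}}) v := [set w | [set v; w] \in M].

Lemma deg_nbr (T : finType) (M : {set {set T}}) (v : T) :
  (forall E, E \in M -> #|E| = 2) -> #|[set E in M | v \in E]| = #|nbr M v|.
Proof.
move=> H2.
have inj: {in nbr M v &, injective (fun w => [set v; w])}.
  move=> w1 w2; rewrite !inE => m1 m2 eq.
  have: w1 \in [set v; w2] by rewrite -eq set22.
  rewrite !inE => /orP[/eqP ev|/eqP //].
  by move: m1; rewrite ev setUid => /H2; rewrite cards1.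
rewrite -(card_in_imset inj); apply: eq_card => E; rewrite inE.
apply/andP/imsetP.
- case=> EM vE.
  have /cards2P [x [y [xy Exy]]] : #|E| == 2 by rewrite H2.
  subst E; move: vE; rewrite !inE => /orP[/eqP vx|/eqP vy]; subst v.
  + by exists y; rewrite // inE.
  + by exists x; rewrite ?inE setUC.
- by case=> w; rewrite inE => wM ->; rewrite set21.
Qed.

Lemma edge_card (T : finType) (e : rel T) E :
  irreflexive e -> E \in edges e -> #|E| = 2.
Proof.
move=> irr; rewrite inE => /existsP[x /existsP[y /andP[exy /eqP->]]].
rewrite cards2; case: eqP exy => // ->; by rewrite irr.
Qed.

Lemma edge_rel (T : finType) (e : rel T) a b :
  symmetric e -> irreflexive e -> [set a; b] \in edges e -> e a b.
Proof.
move=> sym irr; rewrite inE => /existsP[x /existsP[y /andP[exy /eqP E]]].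
have ha : a \in [set x; y] by rewrite -E set21.
have hb : b \in [set x; y] by rewrite -E set22.
have hx : x \in [set a; b] by rewrite E set21.
have hy : y \in [set a; b] by rewrite E set22.
move: ha hb hx hy; rewrite !inE.
move=> /orP[/eqP->|/eqP->] /orP[/eqP->|/eqP->] //; try by rewrite sym.
- by rewrite !orbb => _ /eqP yx; move: exy; rewrite yx irr.
- by rewrite !orbb => /eqP xy; move: exy; rewrite xy irr.
Qed.

Lemma Fset_mem (T1 T2 : finType) (MG : {set {set T1}}) (MH : {set {set T2}}) g g' h h' :
  (forall E, E \in MG -> #|E| = 2) ->
  ([set (g,h); (g',h')] \in Fset MG MH) = ([set g; g'] \in MG) && ([set h; h'] \in MH).
Proof.
move=> H2; apply/idP/idP; last first.
  by case/andP=> m1 m2; rewrite inE; apply/existsP; exists g; apply/existsP; exists g';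
   apply/existsP; exists h; apply/existsP; exists h'; rewrite m1 m2 eqxx.
rewrite inE => /existsP[a /existsP[a' /existsP[b /existsP[b' /and3P[ma mb /eqP E]]]]].
have aa : a != a' by move: (H2 _ ma); rewrite cards2; case: (a != a').
have h1 : (g,h) \in [set (a,b); (a',b')] by rewrite -E set21.
have h2 : (g',h') \in [set (a,b); (a',b')] by rewrite -E set22.
have h3 : (a',b') \in [set (g,h); (g',h')] by rewrite E set22.
move: h1 h2 h3; rewrite !inE !xpair_eqE.
case/orP=> /andP[/eqP e1 /eqP e2]; case/orP=> /andP[/eqP e3 /eqP e4]; subst => //; try by rewrite ma mb.
- by rewrite orbb eq_sym (negbTE aa).
- by move=> _; rewrite setUC ma /= setUC.
- have : (a, b) \in [set (a', b'); (a', b')] by rewrite E set21.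
  by rewrite !inE orbb xpair_eqE (negbTE aa).
Qed.

Lemma Fset_card2 (T1 T2 : finType) (MG : {set {set T1}}) (MH : {set {set T2}}) :
  (forall E, E \in MG -> #|E| = 2) -> forall E, E \in Fset MG MH -> #|E| = 2.
Proof.
move=> H2 E; rewrite inE => /existsP[g /existsP[g' /existsP[h /existsP[h' /and3P[m1 m2 /eqP->]]]]].
rewrite cards2; move: (H2 _ m1); rewrite cards2 xpair_eqE.
by case: (g == g').
Qed.

Lemma deg_F (T1 T2 : finType) (MG : {set {set T1}}) (MH : {set {set T2}}) g h :
  (forall E, E \in MG -> #|E| = 2) -> (forall E, E \in MH -> #|E| = 2) ->
  #|[set E in Fset MG MH | (g,h) \in E]| =
  #|[set E in MG | g \in E]| * #|[set E in MH | h \in E]|.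
Proof.
move=> HG HH; rewrite !deg_nbr //; last exact: Fset_card2.
rewrite -cardsX; apply: eq_card => -[g' h'].
by rewrite inE Fset_mem // in_setX !inE.
Qed.

Lemma handshake (T : finType) (M : {set {set T}}) :
  (forall E, E \in M -> #|E| = 2) ->
  \sum_v #|[set E in M | v \in E]| = 2 * #|M|.
Proof.
move=> H2.
transitivity (\sum_v \sum_(E in M) ((v \in E) : nat)).
  apply: eq_bigr => v _; rewrite -sum1_card big_mkcond [RHS]big_mkcond /=.
  by apply: eq_bigr => E _; rewrite !inE; case: (E \in M); case: (v \in E).
rewrite exchange_big /= (eq_bigr (fun=> 2)) => [|E EM].
  by rewrite sum_nat_const mulnC.
rewrite -(H2 _ EM) -sum1_card [RHS]big_mkcond /=.
by apply: eq_bigr => v _; case: (v \in E).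
Qed.

Lemma card_Fset (T1 T2 : finType) (MG : {set {set T1}}) (MH : {set {set T2}}) :
  (forall E, E \in MG -> #|E| = 2) -> (forall E, E \in MH -> #|E| = 2) ->
  #|Fset MG MH| = 2 * #|MG| * #|MH|.
Proof.
move=> HG HH.
have := handshake (Fset_card2 (MH := MH) HG).
rewrite (eq_bigr (fun p => #|[set E in MG | p.1 \in E]| * #|[set E in MH | p.2 \in E]|)); last first.
  by move=> [g h] _; rewrite deg_F.
rewrite -(pair_bigA _ (fun g h => #|[set E in MG | g \in E]| * #|[set E in MH | h \in E]|)) /=.
under eq_bigr do rewrite -big_distrr /=.
rewrite -big_distrl /= !handshake // => /eqP.
rewrite -!mulnA eqn_pmul2l // => /eqP.
rewrite mulnCA => <-. by rewrite mulnA.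
Qed.

Lemma Fset_kmatch (p : gprod) (T1 T2 : finType) (e1 : rel T1) (e2 : rel T2) kG kH (MG : {set {set T1}}) (MH : {set {set T2}}) :
  symmetric e1 -> irreflexive e1 -> symmetric e2 -> irreflexive e2 ->
  kmatching e1 kG MG -> kmatching e2 kH MH ->
  kmatching (prod_rel p e1 e2) (kG * kH) (Fset MG MH).
Proof.
move=> s1 i1 s2 i2 /andP[sG dG] /andP[sH dH].
have HG : forall E, E \in MG -> #|E| = 2 by move=> E /(subsetP sG); apply: edge_card.
have HH : forall E, E \in MH -> #|E| = 2 by move=> E /(subsetP sH); apply: edge_card.
apply/andP; split.
- apply/subsetP => E; rewrite inE => /existsP[g /existsP[g' /existsP[h /existsP[h' /and3P[m1 m2 /eqP->]]]]].
  rewrite inE; apply/existsP; exists (g,h); apply/existsP; exists (g',h'); rewrite eqxx andbT.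
  have eg := edge_rel s1 i1 (subsetP sG _ m1).
  have eh := edge_rel s2 i2 (subsetP sH _ m2).
  by case: p; rewrite /= eg eh ?orbT ?andbT.
- apply/forallP => -[g h]; rewrite deg_F //.
  move: (forallP dG g) (forallP dH h) => /orP[/eqP->|/eqP->] /orP[/eqP->|/eqP->];
  by rewrite ?muln0 ?mul0n eqxx ?orbT.
Qed.

Lemma Fset_split (p : gprod) (T1 T2 : finType) (e1 : rel T1) (e2 : rel T2) k (MG : {set {set T1}}) (MH : {set {set T2}}) :
  irreflexive e1 -> irreflexive e2 ->
  MG \subset edges e1 -> MH \subset edges e2 ->
  kmatching (prod_rel p e1 e2) k (Fset MG MH) -> 0 < #|Fset MG MH| ->
  exists kG kH, [/\ 0 < kG, 0 < kH, kG * kH = k, kmatching e1 kG MG & kmatching e2 kH MH].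
Proof.
move=> i1 i2 sG sH /andP[_ dF] /card_gt0P[E].
have HG : forall E, E \in MG -> #|E| = 2 by move=> E' /(subsetP sG); apply: edge_card.
have HH : forall E, E \in MH -> #|E| = 2 by move=> E' /(subsetP sH); apply: edge_card.
rewrite inE => /existsP[g /existsP[g' /existsP[h /existsP[h' /and3P[m1 m2 _]]]]].
set kG := #|[set E in MG | g \in E]|.
set kH := #|[set E in MH | h \in E]|.
have kGp : 0 < kG by apply/card_gt0P; exists [set g; g']; rewrite !inE m1 eqxx.
have kHp : 0 < kH by apply/card_gt0P; exists [set h; h']; rewrite !inE m2 eqxx.
have kk : kG * kH = k.
  move: (forallP dF (g,h)); rewrite deg_F // -/kG -/kH => /orP[/eqP|/eqP //].
  by move/eqP; rewrite muln_eq0 -!leqn0 leqNgt kGp leqNgt kHp.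
exists kG, kH; split => //; apply/andP; split => //; apply/forallP.
- move=> x; move: (forallP dF (x,h)); rewrite deg_F // -/kH -kk.
  by rewrite muln_eq0 (gtn_eqF kHp) orbF eqn_pmul2r.
- move=> y; move: (forallP dF (g,y)); rewrite deg_F // -/kG -kk.
  by rewrite muln_eq0 (gtn_eqF kGp) eqn_pmul2l.
Qed.

Lemma mk_attained (T : finType) (e : rel T) k :
  exists M, kmatching e k M /\ mk k e = #|M|.
Proof.
have z : kmatching e k set0.
  rewrite /kmatching sub0set; apply/forallP => v.
  suff -> : [set E in (set0 : {set {set T}}) | v \in E] = set0 by rewrite cards0.
  by apply/setP => E; rewrite !inE.
have := @eq_bigmax_cond _ (fun M => kmatching e k M) (fun M => #|M|).
case=> [|M MA E]; first by apply/card_gt0P; exists set0.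
by exists M; split; [exact: MA | rewrite -E].
Qed.

Lemma mk_ge (T : finType) (e : rel T) k M : kmatching e k M -> #|M| <= mk k e.
Proof. by move=> h; rewrite /mk (bigD1 M) /= ?leq_maxl. Qed.
Unset Implicit Arguments. Set Strict Implicit.

Theorem mainTheorem13 (p : gprod) (k : nat) (T1 T2 : finType)
  (e1 : rel T1) (e2 : rel T2) :
  symmetric e1 -> irreflexive e1 -> 0 < #|T1| ->
  symmetric e2 -> irreflexive e2 -> 0 < #|T2| ->
  0 < k ->
  well_behaved p k e1 e2 <->
  exists kG kH : nat, [/\ 0 < kG, 0 < kH, kG * kH = k &
    mk k (prod_rel p e1 e2) = 2 * mk kG e1 * mk kH e2].
Proof.
move=> s1 i1 _ s2 i2 _ kp.
have C : forall kG kH, kG * kH = k -> 2 * mk kG e1 * mk kH e2 <= mk k (prod_rel p e1 e2).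
  move=> kG kH kk.
  have [MG [mG ->]] := mk_attained e1 kG.
  have [MH [mH ->]] := mk_attained e2 kH.
  have := mk_ge (Fset_kmatch p s1 i1 s2 i2 mG mH); rewrite kk card_Fset //.
    by move=> E /(subsetP (proj1 (andP mG))); apply: edge_card.
  by move=> E /(subsetP (proj1 (andP mH))); apply: edge_card.
split.
- case=> MG [MH [sG sH kF eqF]].
  have HG : forall E, E \in MG -> #|E| = 2 by move=> E /(subsetP sG); apply: edge_card.
  have HH : forall E, E \in MH -> #|E| = 2 by move=> E /(subsetP sH); apply: edge_card.
  case: (posnP #|Fset MG MH|) => [F0|Fpos].
    exists k, 1; split => //; first by rewrite muln1.
    apply/eqP; rewrite eqn_leq C ?muln1 // andbT eqF F0.
    by move: (C k 1 (muln1 k)); rewrite eqF F0.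
  have [kG [kH [gp hp kk mG mH]]] := Fset_split i1 i2 sG sH kF Fpos.
  exists kG, kH; split => //.
  apply/eqP; rewrite eqn_leq C // andbT eqF card_Fset //.
  by rewrite leq_mul ?leq_mul ?mk_ge.
- case=> kG [kH [gp hp kk eq]].
  have [MG [mG EG]] := mk_attained e1 kG.
  have [MH [mH EH]] := mk_attained e2 kH.
  exists MG, MH; split.
  + exact: (proj1 (andP mG)).
  + exact: (proj1 (andP mH)).
  + rewrite -kk; exact: Fset_kmatch.
  + rewrite eq EG EH card_Fset //.
      by move=> E /(subsetP (proj1 (andP mG))); apply: edge_card.
    by move=> E /(subsetP (proj1 (andP mH))); apply: edge_card.
Qed.
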